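(* Let $G$ be a multiplicative Lie algebra with $G\cong E/\mathcal Z(E)$ for some multiplicative Lie algebra $E$. If $\mathcal Z(E\otimes E)=(\mathcal Z(E)\otimes E)(E\otimes\mathcal Z(E))$, then $G\otimes G$ is Lie capable.
   Context: A multiplicative Lie algebra is a group $(G,\cdot)$ with a binary operation $\star$ such that for all $x,y,z\in G$: $x\star x=1$; $x\star(yz)=(x\star y)\,{}^y(x\star z)$; $(xy)\star z={}^x(y\star z)(x\star z)$; $((x\star y)\star{}^yz)((y\star z)\star{}^zx)((z\star x)\star{}^xy)=1$; ${}^z(x\star y)={}^zx\star{}^zy$, where ${}^xy=xyx^{-1}$. $Z(G)$ is the group center, $LZ(G)=\{x: x\star y=1\ \forall y\}$, $\mathcal Z(G)=LZ(G)\cap Z(G)$. $G$ is Lie capable if $G\cong E/\mathcal Z(E)$ for some multiplicative Lie algebra $E$. The tensor square $G\otimes G$ is the multiplicative Lie algebra generated by symbols $x\otimes y$ ($x,y\in G$) subject to, for all $x,x',y,y'\in G$: $x\otimes(yy')=(x\otimes y)({}^yx\otimes{}^yy')$; $(xx')\otimes y=({}^xx'\otimes{}^xy)(x\otimes y)$; $((x\star x')\otimes{}^{x'}y)({}^yx\otimes(x'\star y))^{-1}({}^xx'\otimes(x\star y)^{-1})^{-1}=1$; $({}^{y'}x\otimes(y\star y'))((y\star x)^{-1}\otimes{}^yy')^{-1}((y'\star x)\otimes{}^xy)^{-1}=1$; and $(x\otimes y)\star(x'\otimes y')=(y\star x)^{-1}\otimes(x'\star y')$. For an ideal $I$ of $E$,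 $I\otimes E$ (resp. $E\otimes I$) denotes the subgroup of $E\otimes E$ generated by all $a\otimes b$ with $a\in I,b\in E$ (resp. $a\in E,b\in I$). *)

(* Defs.v *)
Record mla := Mla {
  car :> Type;
  mul : car -> car -> car;
  one : car;
  inv : car -> car;
  star : car -> car -> car;
  mulA : forall x y z, mul x (mul y z) = mul (mul x y) z;
  mul1g : forall x, mul one x = x;
  mulg1 : forall x, mul x one = x;
  mulVg : forall x, mul (inv x) x = one;
  mulgV : forall x, mul x (inv x) = one;
  (* left conjugation  ^x y = x y x^{-1} is written inline below *)
  star_xx : forall x, star x x = one;
  star_mulr : forall x y z,
    star x (mul y z) = mul (star x y) (mul (mul y (star x z)) (inv y));
  star_mull : forall x y z,
    star (mul x y) z = mul (mul (mul x (star y z)) (inv x)) (star x z);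
  star_jacobi : forall x y z,
    mul (mul (star (star x y) (mul (mul y z) (inv y)))
             (star (star y z) (mul (mul z x) (inv z))))
        (star (star z x) (mul (mul x y) (inv x))) = one;
  star_conj : forall x y z,
    mul (mul z (star x y)) (inv z)
    = star (mul (mul z x) (inv z)) (mul (mul z y) (inv z))
}.

Arguments mul {m} _ _.
Arguments one {m}.
Arguments inv {m} _.
Arguments star {m} _ _.

Definition conj {G : mla} (x y : G) : G := mul (mul x y) (inv x).

Definition center (G : mla) (x : G) : Prop := forall y : G, mul x y = mul y x.
Definition lie_center (G : mla) (x : G) : Prop := forall y : G, star x y = one.
Definition calZ (G : mla) (x : G) : Prop := lie_center G x /\ center G x.

Definition mla_hom (G H : mla) (f : G -> H) : Prop :=
  (forall x y, f (mul x y) = mul (f x) (f y)) /\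
  (forall x y, f (star x y) = star (f x) (f y)).

(** [G ≅ E / 𝒵(E)]: there is a surjective homomorphism E -> G whose kernel
    is exactly 𝒵(E) (first isomorphism theorem form). *)
Definition iso_quot_calZ (G E : mla) : Prop :=
  exists f : E -> G, mla_hom E G f /\ (forall y : G, exists x : E, f x = y) /\
    (forall x : E, f x = one <-> calZ E x).

Definition lie_capable (G : mla) : Prop := exists E : mla, iso_quot_calZ G E.

(** The defining relations of the tensor square, for a map
    g : G x G -> M  (g x y plays the role of x ⊗ y). *)
Definition tensor_rels (G M : mla) (g : G -> G -> M) : Prop :=
  (forall x y y' : G,
     g x (mul y y') = mul (g x y) (g (conj y x) (conj y y'))) /\
  (forall x x' y : G,
     g (mul x x') y = mul (g (conj x x') (conj x y)) (g x y)) /\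
  (forall x x' y : G,
     mul (mul (g (star x x') (conj x' y)) (inv (g (conj y x) (star x' y))))
         (inv (g (conj x x') (inv (star x y)))) = one) /\
  (forall x y y' : G,
     mul (mul (g (conj y' x) (star y y')) (inv (g (inv (star y x)) (conj y y'))))
         (inv (g (star y' x) (conj x y))) = one) /\
  (forall x y x' y' : G,
     star (g x y) (g x' y') = g (inv (star y x)) (star x' y')).

(** (T, t) is the tensor square G ⊗ G: the multiplicative Lie algebra
    presented by generators x ⊗ y subject to the relations above, i.e. the
    initial object: t satisfies the relations and every map g into a
    multiplicative Lie algebra satisfying them factors uniquely through a
    homomorphism T -> M. *)
Definition is_tensor_square (G T : mla) (t : G -> G -> T) : Prop :=
  tensor_rels G T t /\
  forall (M : mla) (g : G -> G -> M), tensor_rels G M g ->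
    exists h : T -> M, mla_hom T M h /\ (forall x y, h (t x y) = g x y) /\
      forall h' : T -> M, mla_hom T M h' -> (forall x y, h' (t x y) = g x y) ->
        forall z, h' z = h z.

Inductive gen_subgroup (G : mla) (S : G -> Prop) : G -> Prop :=
  | gen_in : forall x, S x -> gen_subgroup G S x
  | gen_one : gen_subgroup G S one
  | gen_mul : forall x y, gen_subgroup G S x -> gen_subgroup G S y ->
                gen_subgroup G S (mul x y)
  | gen_inv : forall x, gen_subgroup G S x -> gen_subgroup G S (inv x).

(** (I ⊗ E)(E ⊗ J) : the subgroup of E ⊗ E generated by all a ⊗ b with
    a ∈ I, or with b ∈ J (the join of the two generated subgroups). *)
Definition tensor_prod_sub (E T : mla) (t : E -> E -> T)
  (I J : E -> Prop) : T -> Prop :=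
  gen_subgroup T (fun z => exists a b, z = t a b /\ (I a \/ J b)).

(* Main.v *)
Require Import Defs.
From Stdlib Require Import FunctionalExtensionality PropExtensionality ProofIrrelevance IndefiniteDescription.

Lemma mul_cancel_l (G : mla) (a x y : G) : mul a x = mul a y -> x = y.
Proof.
  intros H.
  transitivity (mul (inv a) (mul a x)).
  - rewrite mulA, mulVg, mul1g; reflexivity.
  - rewrite H, mulA, mulVg, mul1g; reflexivity.
Qed.

Lemma mul_cancel_r (G : mla) (a x y : G) : mul x a = mul y a -> x = y.
Proof.
  intros H.
  transitivity (mul (mul x a) (inv a)).
  - rewrite <- mulA, mulgV, mulg1; reflexivity.
  - rewrite H, <- mulA, mulgV, mulg1; reflexivity.
Qed.

Lemma inv_uniq (G : mla) (a b : G) : mul a b = one -> a = inv b.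
Proof. intros H. apply (mul_cancel_r G b). rewrite H, mulVg. reflexivity. Qed.

Lemma inv_inv (G : mla) (a : G) : inv (inv a) = a.
Proof. symmetry. apply inv_uniq. apply mulgV. Qed.

Lemma inv_mul (G : mla) (a b : G) : inv (mul a b) = mul (inv b) (inv a).
Proof.
  symmetry. apply inv_uniq.
  rewrite <- mulA, (mulA _ (inv a) a b), mulVg, mul1g, mulVg. reflexivity.
Qed.

Lemma inv_one (G : mla) : inv (@one G) = one.
Proof. symmetry. apply inv_uniq. apply mul1g. Qed.

Lemma one_uniq_l (G : mla) (x y : G) : mul x y = y -> x = one.
Proof. intros H. apply (mul_cancel_r G y). rewrite mul1g. exact H. Qed.

Lemma one_uniq_r (G : mla) (x y : G) : mul x y = x -> y = one.
Proof. intros H. apply (mul_cancel_l G x). rewrite mulg1. exact H. Qed.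

Lemma conj_one_r (G : mla) (x : G) : conj x one = one.
Proof. unfold conj. rewrite mulg1, mulgV. reflexivity. Qed.

Lemma conj_one_l (G : mla) (y : G) : conj one y = y.
Proof. unfold conj. rewrite inv_one, mul1g, mulg1. reflexivity. Qed.

Lemma conj_eq1 (G : mla) (x y : G) : conj x y = one -> y = one.
Proof.
  unfold conj. intros H. apply inv_uniq in H. rewrite inv_inv in H.
  apply (one_uniq_r G x). exact H.
Qed.

Lemma star_one_l (G : mla) (z : G) : star one z = one.
Proof.
  pose proof (star_mull G one one z) as H.
  rewrite mul1g, mul1g, inv_one, mulg1 in H.
  symmetry in H. apply one_uniq_r in H. exact H.
Qed.

Lemma star_one_r (G : mla) (x : G) : star x one = one.
Proof.
  pose proof (star_mulr G x one one) as H.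
  rewrite mul1g, mul1g, inv_one, mulg1 in H.
  symmetry in H. apply one_uniq_r in H. exact H.
Qed.

Lemma calZ_one (G : mla) : calZ G one.
Proof. split. intro y. apply star_one_l. intro y. rewrite mul1g, mulg1. reflexivity. Qed.

Lemma calZ_mul (G : mla) (x y : G) : calZ G x -> calZ G y -> calZ G (mul x y).
Proof.
  intros [Lx Cx] [Ly Cy]. split.
  - intro z. rewrite star_mull, Ly, Lx, !mulg1, mulgV. reflexivity.
  - intro z. rewrite <- mulA, Cy, mulA, Cx, mulA. reflexivity.
Qed.

Lemma calZ_inv (G : mla) (x : G) : calZ G x -> calZ G (inv x).
Proof.
  intros [Lx Cx]. split.
  - intro z. pose proof (star_mull G x (inv x) z) as H.
    rewrite mulgV, star_one_l, Lx, mulg1 in H.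
    symmetry in H. apply conj_eq1 in H. exact H.
  - intro z. apply (mul_cancel_l G x).
    rewrite mulA, mulgV, mul1g, mulA, Cx, <- mulA, mulgV, mulg1. reflexivity.
Qed.

Lemma star_r_calZ (G : mla) (x m : G) : calZ G m -> star x m = one.
Proof.
  intros [Lm Cm].
  pose proof (star_xx G (mul x m)) as H.
  rewrite star_mull, Lm, mulg1, mulgV, mul1g, star_mulr, star_xx, mul1g in H.
  apply (conj_eq1 G x). exact H.
Qed.

Lemma conj_calZ (G : mla) (a c : G) : calZ G c -> conj a c = c.
Proof.
  intros [_ Cc]. unfold conj. rewrite <- Cc, <- mulA, mulgV, mulg1. reflexivity.
Qed.

Lemma hom_mul {G H : mla} {f : G -> H} (hf : mla_hom G H f) x y : f (mul x y) = mul (f x) (f y).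
Proof. apply (proj1 hf). Qed.
Lemma hom_star {G H : mla} {f : G -> H} (hf : mla_hom G H f) x y : f (star x y) = star (f x) (f y).
Proof. apply (proj2 hf). Qed.
Lemma hom_one {G H : mla} {f : G -> H} (hf : mla_hom G H f) : f one = one.
Proof.
  apply (one_uniq_r H (f one)). rewrite <- (hom_mul hf), mul1g. reflexivity.
Qed.
Lemma hom_inv {G H : mla} {f : G -> H} (hf : mla_hom G H f) x : f (inv x) = inv (f x).
Proof. apply inv_uniq. rewrite <- (hom_mul hf), mulVg. apply (hom_one hf). Qed.
Lemma hom_conj {G H : mla} {f : G -> H} (hf : mla_hom G H f) x y : f (conj x y) = conj (f x) (f y).
Proof. unfold conj. rewrite (hom_mul hf), (hom_mul hf), (hom_inv hf). reflexivity. Qed.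
Lemma hom_comp {G H K : mla} {f : G -> H} {g : H -> K} (hf : mla_hom G H f) (hg : mla_hom H K g) :
  mla_hom G K (fun x => g (f x)).
Proof. split; intros; rewrite ?(hom_mul hf), ?(hom_mul hg), ?(hom_star hf), ?(hom_star hg); reflexivity. Qed.
Lemma hom_id (G : mla) : mla_hom G G (fun x => x).
Proof. split; reflexivity. Qed.

Lemma t_one_l (G M : mla) (t : G -> G -> M) : tensor_rels G M t -> forall y, t one y = one.
Proof.
  intros [_ [R2 _]] y. pose proof (R2 one one y) as H.
  rewrite mul1g, !conj_one_l in H. symmetry in H. apply one_uniq_l in H. exact H.
Qed.
Lemma t_one_r (G M : mla) (t : G -> G -> M) : tensor_rels G M t -> forall x, t x one = one.
Proof.
  intros [R1 _] x. pose proof (R1 x one one) as H.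
  rewrite mul1g, !conj_one_l in H. symmetry in H. apply one_uniq_r in H. exact H.
Qed.

Ltac push f := repeat first [rewrite (hom_conj f) | rewrite (hom_star f) | rewrite (hom_inv f) | rewrite (hom_mul f)].
Ltac pull f := repeat first [rewrite <- (hom_conj f) | rewrite <- (hom_star f) | rewrite <- (hom_inv f) | rewrite <- (hom_mul f)].

Lemma rels_pre (E G M : mla) (p : E -> G) (hp : mla_hom E G p) (t : G -> G -> M) :
  tensor_rels G M t -> tensor_rels E M (fun a b => t (p a) (p b)).
Proof.
  intros [R1 [R2 [R3 [R4 R5]]]].
  repeat split; intros; push hp; auto.
Qed.

Lemma rels_post (E T M : mla) (t : E -> E -> T) (f : T -> M) (hf : mla_hom T M f) :
  tensor_rels E T t -> tensor_rels E M (fun a b => f (t a b)).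
Proof.
  intros [R1 [R2 [R3 [R4 R5]]]].
  repeat split; intros.
  - rewrite R1. apply (hom_mul hf).
  - rewrite R2. apply (hom_mul hf).
  - pull hf. rewrite R3. apply (hom_one hf).
  - pull hf. rewrite R4. apply (hom_one hf).
  - pull hf. rewrite R5. reflexivity.
Qed.

Lemma descend (E G M : mla) (p : E -> G) (hp : mla_hom E G p)
  (sp : forall y : G, exists x, p x = y) (g : G -> G -> M) :
  tensor_rels E M (fun a b => g (p a) (p b)) -> tensor_rels G M g.
Proof.
  intros [R1 [R2 [R3 [R4 R5]]]].
  repeat split; intros;
  repeat match goal with
  | v : car G |- _ => let a := fresh "a" in destruct (sp v) as [a <-]
  end; pull hp; auto.
Qed.

Definition rel (T : mla) (x y : T) : Prop := calZ T (mul (inv x) y).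

Lemma rel_refl (T : mla) (x : T) : rel T x x.
Proof. unfold rel. rewrite mulVg. apply calZ_one. Qed.
Lemma rel_sym (T : mla) (x y : T) : rel T x y -> rel T y x.
Proof. unfold rel. intro H. apply calZ_inv in H. rewrite inv_mul, inv_inv in H. exact H. Qed.
Lemma rel_trans (T : mla) (x y z : T) : rel T x y -> rel T y z -> rel T x z.
Proof.
  unfold rel. intros H1 H2. pose proof (calZ_mul T _ _ H1 H2) as H.
  rewrite <- mulA, (mulA _ y (inv y) z), mulgV, mul1g in H. exact H.
Qed.
Lemma rel_mulZ (T : mla) (a n : T) : calZ T n -> rel T a (mul a n).
Proof. unfold rel. rewrite mulA, mulVg, mul1g. auto. Qed.
Lemma rel_dec (T : mla) (a b : T) : b = mul a (mul (inv a) b).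
Proof. rewrite mulA, mulgV, mul1g. reflexivity. Qed.

Lemma rel_mul (T : mla) (a a' b b' : T) : rel T a a' -> rel T b b' -> rel T (mul a b) (mul a' b').
Proof.
  unfold rel at 1 2. intros Ha Hb.
  rewrite (rel_dec T a a'), (rel_dec T b b').
  set (n := mul (inv a) a') in *. set (m := mul (inv b) b') in *.
  replace (mul (mul a n) (mul b m)) with (mul (mul a b) (mul n m)).
  - apply rel_mulZ. apply calZ_mul; auto.
  - destruct Ha as [_ Cn].
    rewrite <- !mulA. f_equal. rewrite !mulA. f_equal. symmetry. apply Cn.
Qed.

Lemma rel_inv (T : mla) (a a' : T) : rel T a a' -> rel T (inv a) (inv a').
Proof.
  unfold rel at 1. intros Ha. rewrite (rel_dec T a a').
  set (n := mul (inv a) a') in *.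
  rewrite inv_mul. pose proof (calZ_inv T n Ha) as Hn.
  destruct Hn as [Ln Cn]. rewrite Cn. apply rel_mulZ. split; auto.
Qed.

Lemma star_calZ_l (T : mla) (a n z : T) : calZ T n -> star (mul a n) z = star a z.
Proof.
  intros [Ln _]. rewrite star_mull, Ln, mulg1, mulgV, mul1g. reflexivity.
Qed.
Lemma star_calZ_r (T : mla) (a b m : T) : calZ T m -> star a (mul b m) = star a b.
Proof.
  intros Hm. rewrite star_mulr, (star_r_calZ T a m Hm), mulg1, mulgV, mulg1. reflexivity.
Qed.

Lemma rel_star (T : mla) (a a' b b' : T) : rel T a a' -> rel T b b' -> rel T (star a b) (star a' b').
Proof.
  unfold rel at 1 2. intros Ha Hb.
  rewrite (rel_dec T a a'), (rel_dec T b b').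
  rewrite star_calZ_l, star_calZ_r by auto. apply rel_refl.
Qed.

Definition cls (T : mla) (x : T) : T -> Prop := fun y => rel T x y.
Definition Qcar (T : mla) : Type := {P : T -> Prop | exists x, P = cls T x}.
Definition qc (T : mla) (x : T) : Qcar T := exist _ (cls T x) (ex_intro _ x eq_refl).
Definition rep (T : mla) (P : Qcar T) : T :=
  proj1_sig (constructive_indefinite_description _ (proj2_sig P)).

Lemma rep_spec (T : mla) (P : Qcar T) : proj1_sig P = cls T (rep T P).
Proof. unfold rep. destruct (constructive_indefinite_description _ _) as [x Hx]. simpl. exact Hx. Qed.

Lemma qc_rep (T : mla) (P : Qcar T) : qc T (rep T P) = P.
Proof.
  pose proof (rep_spec T P) as H. destruct P as [P HP]. unfold qc.
  apply subset_eq_compat. simpl in H. symmetry. exact H.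
Qed.

Lemma qc_eq (T : mla) (x y : T) : rel T x y -> qc T x = qc T y.
Proof.
  intros H. unfold qc. apply subset_eq_compat.
  extensionality z. apply propositional_extensionality. unfold cls. split; intro H'.
  - apply rel_trans with x; auto. apply rel_sym; auto.
  - apply rel_trans with y; auto.
Qed.

Lemma qc_inj (T : mla) (x y : T) : qc T x = qc T y -> rel T x y.
Proof.
  intros H. apply (f_equal (@proj1_sig _ _)) in H. simpl in H.
  assert (H0 : cls T y y) by apply rel_refl. rewrite <- H in H0. exact H0.
Qed.

Lemma qsurj (T : mla) (P : Qcar T) : exists x, P = qc T x.
Proof. exists (rep T P). symmetry. apply qc_rep. Qed.

Lemma rel_rep (T : mla) (x : T) : rel T (rep T (qc T x)) x.
Proof. apply qc_inj. apply qc_rep. Qed.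

Definition qmul (T : mla) (P R : Qcar T) : Qcar T := qc T (mul (rep T P) (rep T R)).
Definition qstar (T : mla) (P R : Qcar T) : Qcar T := qc T (star (rep T P) (rep T R)).
Definition qinv (T : mla) (P : Qcar T) : Qcar T := qc T (inv (rep T P)).
Definition qone (T : mla) : Qcar T := qc T one.

Lemma qmul_qc (T : mla) (x y : T) : qmul T (qc T x) (qc T y) = qc T (mul x y).
Proof. unfold qmul. apply qc_eq. apply rel_mul; apply rel_rep. Qed.
Lemma qstar_qc (T : mla) (x y : T) : qstar T (qc T x) (qc T y) = qc T (star x y).
Proof. unfold qstar. apply qc_eq. apply rel_star; apply rel_rep. Qed.
Lemma qinv_qc (T : mla) (x : T) : qinv T (qc T x) = qc T (inv x).
Proof. unfold qinv. apply qc_eq. apply rel_inv; apply rel_rep. Qed.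

Ltac qdes T := repeat match goal with
  | P : Qcar T |- _ => let x := fresh "x" in destruct (qsurj T P) as [x ->]
  end.
Ltac qnorm T := unfold qone; repeat first [rewrite (qmul_qc T) | rewrite (qstar_qc T) | rewrite (qinv_qc T)].

Lemma QmulA (T : mla) : forall x y z : Qcar T, qmul T x (qmul T y z) = qmul T (qmul T x y) z.
Proof. intros; qdes T; qnorm T; f_equal; apply mulA. Qed.
Lemma Qmul1g (T : mla) : forall x : Qcar T, qmul T (qone T) x = x.
Proof. intros; qdes T; qnorm T; f_equal; apply mul1g. Qed.
Lemma Qmulg1 (T : mla) : forall x : Qcar T, qmul T x (qone T) = x.
Proof. intros; qdes T; qnorm T; f_equal; apply mulg1. Qed.
Lemma QmulVg (T : mla) : forall x : Qcar T, qmul T (qinv T x) x = qone T.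
Proof. intros; qdes T; qnorm T; f_equal; apply mulVg. Qed.
Lemma QmulgV (T : mla) : forall x : Qcar T, qmul T x (qinv T x) = qone T.
Proof. intros; qdes T; qnorm T; f_equal; apply mulgV. Qed.
Lemma Qstar_xx (T : mla) : forall x : Qcar T, qstar T x x = qone T.
Proof. intros; qdes T; qnorm T; f_equal; apply star_xx. Qed.
Lemma Qstar_mulr (T : mla) : forall x y z : Qcar T,
    qstar T x (qmul T y z) = qmul T (qstar T x y) (qmul T (qmul T y (qstar T x z)) (qinv T y)).
Proof. intros; qdes T; qnorm T; f_equal; apply star_mulr. Qed.
Lemma Qstar_mull (T : mla) : forall x y z : Qcar T,
    qstar T (qmul T x y) z = qmul T (qmul T (qmul T x (qstar T y z)) (qinv T x)) (qstar T x z).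
Proof. intros; qdes T; qnorm T; f_equal; apply star_mull. Qed.
Lemma Qstar_jacobi (T : mla) : forall x y z : Qcar T,
    qmul T (qmul T (qstar T (qstar T x y) (qmul T (qmul T y z) (qinv T y)))
             (qstar T (qstar T y z) (qmul T (qmul T z x) (qinv T z))))
        (qstar T (qstar T z x) (qmul T (qmul T x y) (qinv T x))) = qone T.
Proof. intros; qdes T; qnorm T; f_equal; apply star_jacobi. Qed.
Lemma Qstar_conj (T : mla) : forall x y z : Qcar T,
    qmul T (qmul T z (qstar T x y)) (qinv T z)
    = qstar T (qmul T (qmul T z x) (qinv T z)) (qmul T (qmul T z y) (qinv T z)).
Proof. intros; qdes T; qnorm T; f_equal; apply star_conj. Qed.

Definition Qmla (T : mla) : mla :=
  Mla (Qcar T) (qmul T) (qone T) (qinv T) (qstar T) (QmulA T) (Qmul1g T) (Qmulg1 T)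
      (QmulVg T) (QmulgV T) (Qstar_xx T) (Qstar_mulr T) (Qstar_mull T) (Qstar_jacobi T) (Qstar_conj T).

Lemma qc_hom (T : mla) : mla_hom T (Qmla T) (qc T).
Proof. split; intros x y; symmetry; [exact (qmul_qc T x y) | exact (qstar_qc T x y)]. Qed.

Lemma qc_one_iff (T : mla) (x : T) : (qc T x : Qmla T) = one <-> calZ T x.
Proof.
  split; intro H.
  - apply qc_inj in H. unfold rel in H. rewrite mulg1 in H. apply calZ_inv in H.
    rewrite inv_inv in H. exact H.
  - apply qc_eq. unfold rel. rewrite mulg1. apply calZ_inv. exact H.
Qed.

Lemma rep_kill (T M : mla) (h : T -> M) (hh : mla_hom T M h)
  (kill : forall z, calZ T z -> h z = one) (x : T) : h (rep T (qc T x)) = h x.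
Proof.
  pose proof (rel_sym T _ _ (rel_rep T x)) as H. unfold rel in H.
  rewrite (rel_dec T x (rep T (qc T x))), (hom_mul hh), (kill _ H), mulg1. reflexivity.
Qed.

Theorem proposition3p6 :
  forall (G E : mla), iso_quot_calZ G E ->
  forall (TE : mla) (tE : E -> E -> TE), is_tensor_square E TE tE ->
  (forall z : TE, calZ TE z <-> tensor_prod_sub E TE tE (calZ E) (calZ E) z) ->
  forall (TG : mla) (tG : G -> G -> TG), is_tensor_square G TG tG ->
  lie_capable TG.
Proof.
  intros G E [p [hp [sp kp]]] TE tE [relsE uE] HZ TG tG [relsG uG].
  assert (relsEG : tensor_rels E TG (fun a b => tG (p a) (p b))) by (apply rels_pre; auto).
  destruct (uE TG _ relsEG) as [h [hh [hgen _]]].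
  assert (kill : forall z, calZ TE z -> h z = one).
  { intros z Hz. apply HZ in Hz. unfold tensor_prod_sub in Hz.
    induction Hz as [z [a [b [-> [Ha | Hb]]]] | | x y _ IH1 _ IH2 | x _ IH].
    - rewrite hgen. apply kp in Ha. rewrite Ha. apply (t_one_l G TG tG relsG).
    - rewrite hgen. apply kp in Hb. rewrite Hb. apply (t_one_r G TG tG relsG).
    - apply (hom_one hh).
    - rewrite (hom_mul hh), IH1, IH2, mulg1. reflexivity.
    - rewrite (hom_inv hh), IH, inv_one. reflexivity. }
  set (Q := Qmla TE).
  set (q := qc TE).
  assert (hq : mla_hom TE Q q) by apply qc_hom.
  assert (qgenZ : forall a b, calZ E a \/ calZ E b -> (q (tE a b) : Q) = one).
  { intros a b Hab. apply qc_one_iff. apply HZ. apply gen_in. exists a, b. auto. }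
  pose proof relsE as [R1 [R2 _]].
  assert (K1 : forall a b c, calZ E c -> (q (tE (mul a c) b) : Q) = q (tE a b)).
  { intros a b c Hc. rewrite R2, (hom_mul hq), (conj_calZ E a c Hc), qgenZ by auto.
    apply mul1g. }
  assert (K2 : forall a b c, calZ E c -> (q (tE a (mul b c)) : Q) = q (tE a b)).
  { intros a b c Hc. rewrite R1, (hom_mul hq), (conj_calZ E b c Hc), (qgenZ (conj b a) c) by auto.
    apply mulg1. }
  assert (kerp : forall a a', p a = p a' -> calZ E (mul (inv a) a')).
  { intros a a' H. apply kp. rewrite (hom_mul hp), (hom_inv hp), H. apply mulVg. }
  assert (K : forall a a' b b', p a = p a' -> p b = p b' -> (q (tE a b) : Q) = q (tE a' b')).
  { intros a a' b b' Ha Hb.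
    rewrite (rel_dec E a a'), (rel_dec E b b'), K1, K2 by auto. reflexivity. }
  set (s := fun x : G => proj1_sig (constructive_indefinite_description _ (sp x))).
  assert (hs : forall x, p (s x) = x).
  { intro x. unfold s. destruct (constructive_indefinite_description _ _). simpl. auto. }
  set (g' := fun x y : G => (q (tE (s x) (s y)) : Q)).
  assert (Hg' : forall a b, g' (p a) (p b) = q (tE a b)).
  { intros a b. unfold g'. apply K; apply hs. }
  assert (relsg' : tensor_rels G Q g').
  { apply (descend E G Q p hp sp).
    replace (fun a b => g' (p a) (p b)) with (fun a b => (q (tE a b) : Q)).
    - apply rels_post; auto.
    - extensionality a. extensionality b. symmetry. apply Hg'. }
  destruct (uG Q g' relsg') as [k [hk [kgen _]]].
  assert (kh : forall z, k (h z) = q z).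
  { assert (relsq : tensor_rels E Q (fun a b => (q (tE a b) : Q))).
    { apply rels_post; auto. }
    destruct (uE Q _ relsq) as [h0 [_ [_ uniq]]].
    intro z. rewrite (uniq (fun z => k (h z))), (uniq q); auto.
    - apply hom_comp; auto.
    - intros a b. rewrite hgen, kgen. apply Hg'. }
  exists TE, h. split; [exact hh | split].
  - intro y.
    exists (rep TE (k y)).
    set (phi := fun P : Q => h (rep TE P)).
    assert (hphi : mla_hom Q TG phi).
    { split; intros P R; destruct (qsurj TE P) as [x ->]; destruct (qsurj TE R) as [x0 ->]; unfold phi;
      [change (@mul Q (qc TE x) (qc TE x0)) with (qmul TE (qc TE x) (qc TE x0)); rewrite qmul_qc
      |change (@star Q (qc TE x) (qc TE x0)) with (qstar TE (qc TE x) (qc TE x0)); rewrite qstar_qc];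
      rewrite !(rep_kill TE TG h hh kill); [apply (hom_mul hh) | apply (hom_star hh)]. }
    destruct (uG TG tG relsG) as [h1 [_ [_ uniq1]]].
    change (phi (k y) = y).
    rewrite (uniq1 (fun y => phi (k y))), (uniq1 (fun y => y)); auto.
    + apply hom_id.
    + apply hom_comp; auto.
    + intros x1 y1. rewrite kgen. unfold g', phi, q.
      rewrite (rep_kill TE TG h hh kill), hgen, !hs. reflexivity.
  - intro x. split; intro H.
    + apply (qc_one_iff TE). fold q. rewrite <- kh, H. apply (hom_one hk).
    + apply kill. exact H.
Qed.
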